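(* Let $N\in\mathbb{N}$, let $x_1,\dots,x_N\in\mathbb{R}^3$ be distinct points and let $\alpha_1,\dots,\alpha_N\in\mathbb{R}$ satisfy (A1) $\alpha_n>0$ for all $n$, and (A2) $\sum_{m\neq n}\frac{1}{(4\pi\alpha_m)^2|x_m-x_n|^2}<1$. Then for every $z\in\mathbb{C}\setminus[0,+\infty)$ the matrix $\Gamma_N^z$ is invertible, and $\Gamma_N^z$ extends continuously to two (distinct) invertible matrices as $z$ approaches the cut $[0,+\infty)$ from above and from below. Furthermore, $(\Gamma_N^z)^{-1}$ and its boundary extensions admit the absolutely convergent Neumann series representation $$(\Gamma_N^z)^{-1}=\sum_{j=0}^\infty\big[(V_N^z)^{-1}P_N^z\big]^j(V_N^z)^{-1},$$ where $[V_N^z]_{mn}:=(\alpha_n-\frac{i\sqrt z}{4\pi})\delta_{mn}$ and $[P_N^z]_{mn}:=\frac{e^{i\sqrt z|x_m-x_n|}}{4\pi|x_m-x_n|}(1-\delta_{mn})$ (with the corresponding boundary values on the cut).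
   Context: For $z\in\mathbb{C}\setminus[0,+\infty)$, $\sqrt{z}$ denotes the branch with $\Im\sqrt z>0$ (on the cut $z=v^2$, $v>0$, the boundary values are $\sqrt z\to v$ from above and $\sqrt z\to-v$ from below). $\Gamma_N^z$ is the $N\times N$ matrix with entries $[\Gamma_N^z]_{mn}=(\alpha_n-\frac{i\sqrt z}{4\pi})\delta_{mn}-\frac{e^{i\sqrt z|x_m-x_n|}}{4\pi|x_m-x_n|}(1-\delta_{mn})$, where the off-diagonal term is understood to vanish for $m=n$. *)

(* Defs.v *)
From HB Require Import structures.
From mathcomp Require Import all_boot all_order all_algebra.
From mathcomp Require Import all_classical all_reals all_analysis.
From mathcomp Require Export complex.
Import Order.TTheory GRing.Theory Num.Theory.
Import numFieldTopology.Exports numFieldNormedType.Exports.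

Set Implicit Arguments.
Unset Strict Implicit.
Unset Printing Implicit Defensive.

Local Open Scope ring_scope.
Local Open Scope classical_set_scope.
Local Open Scope complex_scope.

(* The complex numbers R[i] (R : realType) carry the usual (modulus) normed
   topology; MathComp-Analysis provides it for every numFieldType, we make it
   canonical on the concrete type R[i]. *)
#[non_forgetful_inheritance]
HB.instance Definition _ (R : rcfType) := NormedModule.copy R[i] (R[i])^o.

Section Defs.
Variable R : realType.

Definition dist3 (x y : 'rV[R]_3) : R :=
  Num.sqrt (\sum_(i < 3) (x ord0 i - y ord0 i) ^+ 2).

(* e^{i w} for w : C, i.e. e^{-Im w} (cos (Re w) + i sin (Re w)). *)
Definition expi (w : R[i]) : R[i] :=
  (expR (- complex.Im w) * cos (complex.Re w))
    +i* (expR (- complex.Im w) * sin (complex.Re w)).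

Definition on_cut (z : R[i]) : Prop := complex.Im z = 0 /\ 0 <= complex.Re z.

(* The branch of the square root with Im sqrt z > 0 on C \ [0,+oo):
   MathComp's sqrtC (argument in [0, pi)). *)
Definition sqrt_branch (z : R[i]) : R[i] := sqrtC z.

Variables (N : nat) (x : 'I_N -> 'rV[R]_3) (alpha : 'I_N -> R).

Local Notation d m n := ((dist3 (x m) (x n))%:C).
Local Notation fourpi := ((4 * pi : R)%:C).

(* Gamma with sqrt z replaced by a parameter k (k = sqrt z, or its boundary
   value +-v on the cut). For m = n the off-diagonal term is multiplied by 0. *)
Definition GammaK (k : R[i]) : 'M[R[i]]_N :=
  \matrix_(m, n) (((alpha n)%:C - 'i * k / fourpi) * (m == n)%:R
                  - expi (k * d m n) / (fourpi * d m n) * (1 - (m == n)%:R)).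

Definition Gamma (z : R[i]) : 'M[R[i]]_N := GammaK (sqrt_branch z).

Definition VK (k : R[i]) : 'M[R[i]]_N :=
  \matrix_(m, n) (((alpha n)%:C - 'i * k / fourpi) * (m == n)%:R).

Definition PK (k : R[i]) : 'M[R[i]]_N :=
  \matrix_(m, n) (expi (k * d m n) / (fourpi * d m n) * (1 - (m == n)%:R)).

(* j-th power of a square matrix (works for every size N, including 0). *)
Definition mxpow (A : 'M[R[i]]_N) (j : nat) : 'M[R[i]]_N := iter j (mulmx A) 1%:M.

Definition neumann_term (k : R[i]) (j : nat) : 'M[R[i]]_N :=
  mxpow (invmx (VK k) *m PK k) j *m invmx (VK k).

Definition neumann_rep (k : R[i]) : Prop :=
  forall m n : 'I_N,
    cvgn (series (fun j => Normc.normc (neumann_term k j m n))) /\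
    series (fun j => neumann_term k j m n) @ \oo --> invmx (GammaK k) m n.

End Defs.

(* Main.v *)
Require Import Defs.
From HB Require Import structures.
From mathcomp Require Import all_boot all_order all_algebra.
From mathcomp Require Import all_classical all_reals all_analysis.
From mathcomp Require Import complex.
From mathcomp Require Import ring lra.
Import Order.TTheory GRing.Theory Num.Theory.
Import numFieldTopology.Exports numFieldNormedType.Exports.
Local Open Scope ring_scope.
Local Open Scope classical_set_scope.
Local Open Scope complex_scope.
Set Implicit Arguments.
Unset Strict Implicit.
Unset Printing Implicit Defensive.

Section NC.
Variable R : realType.
Local Notation nc := (@Normc.normc R).
Local Notation Re := (@complex.Re R).
Local Notation Im := (@complex.Im R).

Lemma ncE (z : R[i]) : `|z| = (nc z)%:C.
Proof. by []. Qed.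

Lemma nc_ge0 (z : R[i]) : 0 <= nc z.
Proof. by case: z => a b /=; rewrite sqrtr_ge0. Qed.

Lemma ncM (a b : R[i]) : nc (a * b) = nc a * nc b.
Proof. exact: Normc.normcM. Qed.

Lemma ncD (a b : R[i]) : nc (a + b) <= nc a + nc b.
Proof. exact: le_normcD. Qed.

Lemma ncN (a : R[i]) : nc (- a) = nc a.
Proof. exact: normcN. Qed.

Lemma ncV (a : R[i]) : nc (a^-1) = (nc a)^-1.
Proof. exact: Normc.normcV. Qed.

Lemma ncR (r : R) : nc (r%:C) = `|r|.
Proof. by rewrite /= expr0n /= addr0 sqrtr_sqr. Qed.

Lemma nc_Re (z : R[i]) : `|Re z| <= nc z.
Proof. case: z => a b /=; rewrite -sqrtr_sqr ler_sqrt; nra. Qed.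

Lemma nc_Im (z : R[i]) : `|Im z| <= nc z.
Proof. case: z => a b /=; rewrite -sqrtr_sqr ler_sqrt; nra. Qed.

Lemma nc_ReIm (z : R[i]) : nc z <= `|Re z| + `|Im z|.
Proof.
case: z => a b.
have -> : a +i* b = a%:C + 'i * b%:C by apply/eqP; rewrite eq_complex /=; apply/andP; split; apply/eqP; ring.
apply: le_trans (ncD _ _) _; rewrite ncM !ncR /= expr0n expr1n /= add0r sqrtr1 mul1r.
by rewrite !(mul0r, mul1r, subr0, addr0, add0r).
Qed.

Lemma nc_eq0 (z : R[i]) : nc z = 0 -> z = 0.
Proof. exact: Normc.eq0_normc. Qed.

Lemma nc_sum (I : finType) (f : I -> R[i]) : nc (\sum_i f i) <= \sum_i nc (f i).
Proof.
elim/big_rec2: _ => [|i y1 y2 _ IH]; first by rewrite Normc.normc0.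
by apply: le_trans (ncD _ _) _; rewrite lerD2l.
Qed.
End NC.

Section CS.
Variable R : realType.
Local Notation nc := (@Normc.normc R).

Lemma CS (I : finType) (a b : I -> R) :
  (\sum_i a i * b i) ^+ 2 <= (\sum_i a i ^+ 2) * (\sum_i b i ^+ 2).
Proof.
have E : \sum_i \sum_j (a i * b j - a j * b i) ^+ 2 =
   2 * ((\sum_i a i ^+ 2) * (\sum_i b i ^+ 2) - (\sum_i a i * b i) ^+ 2).
  rewrite (eq_bigr (fun i => \sum_j (a i ^+ 2 * b j ^+ 2) + \sum_j (b i ^+ 2 * a j ^+ 2)
      - 2 * \sum_j (a i * b i * (a j * b j)))); last first.
    move=> i _; rewrite mulr_sumr -big_split /= -sumrB; apply: eq_bigr => j _; ring.
  rewrite sumrB big_split /= -mulr_sumr -!big_distrlr /=; ring.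
have : 0 <= \sum_i \sum_j (a i * b j - a j * b i) ^+ 2.
  by apply: sumr_ge0 => i _; apply: sumr_ge0 => j _; exact: sqr_ge0.
rewrite E; nra.
Qed.

Definition Fn p q (M : 'M[R[i]]_(p,q)) : R := \sum_i \sum_j nc (M i j) ^+ 2.
Arguments Fn {p q}.

Lemma Fn_ge0 p q (M : 'M[R[i]]_(p,q)) : 0 <= Fn M.
Proof. by apply: sumr_ge0 => i _; apply: sumr_ge0 => j _; exact: sqr_ge0. Qed.

Lemma Fn_mul p q r (M : 'M[R[i]]_(p,q)) (Q : 'M[R[i]]_(q,r)) : Fn (M *m Q) <= Fn M * Fn Q.
Proof.
have step : forall i j, nc ((M *m Q) i j) ^+ 2 <=
   (\sum_k nc (M i k) ^+ 2) * (\sum_k nc (Q k j) ^+ 2).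
  move=> i j; apply: (le_trans _ (CS (fun k => nc (M i k)) (fun k => nc (Q k j)))).
  have h1 : nc ((M *m Q) i j) <= \sum_k nc (M i k) * nc (Q k j).
    rewrite mxE; apply: le_trans (nc_sum _) _.
    by apply: ler_sum => k _; rewrite ncM.
  have h0 := nc_ge0 ((M *m Q) i j).
  nra.
rewrite /Fn; apply: le_trans.
  by apply: ler_sum => i _; apply: ler_sum => j _; exact: step i j.
rewrite mulr_suml; apply: ler_sum => i _; rewrite -mulr_sumr exchange_big /=; exact: le_refl.
Qed.

Lemma Fn_entry p q (M : 'M[R[i]]_(p,q)) i j : nc (M i j) ^+ 2 <= Fn M.
Proof.
rewrite /Fn (bigD1 i) //= (bigD1 j (P := predT)) //= -addrA lerDl.
apply: addr_ge0; first by apply: sumr_ge0 => k _; exact: sqr_ge0.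
by apply: sumr_ge0 => k _; apply: sumr_ge0 => l _; exact: sqr_ge0.
Qed.

Lemma Fn_eq0 p q (M : 'M[R[i]]_(p,q)) : Fn M <= 0 -> M = 0.
Proof.
move=> h; apply/matrixP => i j; rewrite mxE; apply: nc_eq0.
have := Fn_entry M i j; have := nc_ge0 (M i j); nra.
Qed.
End CS.

Section Cont.
Variable R : realType.
Local Notation nc := (@Normc.normc R).
Local Notation Re := (@complex.Re R).
Local Notation Im := (@complex.Im R).

Lemma cvgC_nc {T} {F : set_system T} {FF : Filter F} (f : T -> R[i]) (l : R[i]) :
  (forall e : R, 0 < e -> \forall t \near F, nc (l - f t) < e) -> f @ F --> l.
Proof.
move=> H; apply/cvgrPdist_lt => eps eps0.
move: eps0; rewrite ltcE /= => /andP[/eqP eIm eRe].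
have -> : eps = (Re eps)%:C by case: eps eIm {eRe} => a b /= ->.
near=> t; rewrite ncE ltcR; near: t; exact: H.
Unshelve. all: by end_near.
Qed.

Lemma nc_cvgC {T} {F : set_system T} {FF : Filter F} (f : T -> R[i]) (l : R[i]) :
  f @ F --> l -> (forall e : R, 0 < e -> \forall t \near F, nc (l - f t) < e).
Proof.
move=> /cvgrPdist_lt H e e0.
have e0' : 0 < e%:C :> R[i] by rewrite ltcR.
near=> t; rewrite -ltcR -ncE; near: t; exact: H.
Unshelve. all: by end_near.
Qed.

Lemma ReB (w z : R[i]) : Re (w - z) = Re w - Re z.
Proof. by case: w; case: z. Qed.
Lemma ImB (w z : R[i]) : Im (w - z) = Im w - Im z.
Proof. by case: w; case: z. Qed.

Lemma cont_Re {T} {F : set_system T} {FF : Filter F} (f : T -> R[i]) (l : R[i]) :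
  f @ F --> l -> (fun t => Re (f t)) @ F --> Re l.
Proof.
move=> /nc_cvgC H; apply/cvgrPdist_lt => e e0.
near=> t; rewrite -ReB; apply: le_lt_trans (nc_Re _) _; near: t; exact: H.
Unshelve. all: by end_near.
Qed.

Lemma cont_Im {T} {F : set_system T} {FF : Filter F} (f : T -> R[i]) (l : R[i]) :
  f @ F --> l -> (fun t => Im (f t)) @ F --> Im l.
Proof.
move=> /nc_cvgC H; apply/cvgrPdist_lt => e e0.
near=> t; rewrite -ImB; apply: le_lt_trans (nc_Im _) _; near: t; exact: H.
Unshelve. all: by end_near.
Qed.

Lemma cvg_ReIm {T} {F : set_system T} {FF : Filter F} (f : T -> R[i]) (l : R[i]) :
  (fun t => Re (f t)) @ F --> Re l -> (fun t => Im (f t)) @ F --> Im l -> f @ F --> l.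
Proof.
move=> /cvgrPdist_lt H1 /cvgrPdist_lt H2; apply: cvgC_nc => e e0.
have e2 : 0 < e / 2 by rewrite divr_gt0.
near=> t; apply: le_lt_trans (nc_ReIm _) _; rewrite ReB ImB.
rewrite [e](splitr e) ltrD //; near: t; [exact: H1 | exact: H2].
Unshelve. all: by end_near.
Qed.

Lemma cont_expi (w : R[i]) : expi z @[z --> w] --> expi w.
Proof.
have FFw : ProperFilter (nbhs w) by exact: nbhs_pfilter.
have hIm : (fun t : R[i] => Im t) @ nbhs w --> Im w.
  by apply: cont_Im; exact: cvg_id.
have hRe : (fun t : R[i] => Re t) @ nbhs w --> Re w.
  by apply: cont_Re; exact: cvg_id.
have hexp : (fun t : R[i] => expR (- Im t)) @ w --> expR (- Im w).
  exact: (continuous_cvg _ (@continuous_expR R (- Im w)) (cvgN hIm)).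
have hcos : (fun t : R[i] => cos (Re t)) @ w --> cos (Re w).
  exact: (continuous_cvg _ (@continuous_cos R (Re w)) hRe).
have hsin : (fun t : R[i] => sin (Re t)) @ w --> sin (Re w).
  exact: (continuous_cvg _ (@continuous_sin R (Re w)) hRe).
apply: cvg_ReIm => /=.
  exact: (cvgM hexp hcos).
exact: (cvgM hexp hsin).
Qed.
End Cont.

Section ContG.
Variable R : realType.
Variables (N : nat) (x : 'I_N -> 'rV[R]_3) (alpha : 'I_N -> R).

Lemma cont_GK (m n : 'I_N) (k0 : R[i]) :
  (fun k => GammaK x alpha k m n) @ nbhs k0 --> GammaK x alpha k0 m n.
Proof.
have FFw : ProperFilter (nbhs k0) by exact: nbhs_pfilter.
have -> : (fun k => GammaK x alpha k m n) = (fun k =>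
   ((alpha n)%:C - 'i * k / (4 * pi : R)%:C) * (m == n)%:R
   - expi (k * (dist3 (x m) (x n))%:C) / ((4 * pi : R)%:C * (dist3 (x m) (x n))%:C)
     * (1 - (m == n)%:R)).
  by apply/funext => k; rewrite mxE.
rewrite [GammaK _ _ _ _ _]mxE.
have hk : (fun k : R[i] => k) @ nbhs k0 --> k0 by exact: cvg_id.
apply: cvgB; apply: cvgM; try exact: cvg_cst.
  apply: cvgB; first exact: cvg_cst.
  apply: cvgM; last exact: cvg_cst.
  by apply: cvgM; [exact: cvg_cst | exact: hk].
apply: cvgM; last exact: cvg_cst.
have hd : (fun k => k * (dist3 (x m) (x n))%:C) @ nbhs k0 --> k0 * (dist3 (x m) (x n))%:C.
  by apply: cvgM; [exact: hk | exact: cvg_cst].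
exact: (continuous_cvg (h := @expi R) _ (@cont_expi R (k0 * (dist3 (x m) (x n))%:C)) hd).
Qed.
End ContG.

Section Sqrt.
Variable R : realType.
Local Notation nc := (@Normc.normc R).
Local Notation Re := (@complex.Re R).
Local Notation Im := (@complex.Im R).

Lemma Im_sqrt_ge0 (z : R[i]) : 0 <= Im (sqrtC z).
Proof.
have := @Im_rootC_ge0 _ 2 z isT; rewrite -complexIm.
by rewrite ler0c.
Qed.

Lemma Im_sq (w : R[i]) : Im (w ^+ 2) = 2 * Re w * Im w.
Proof. by case: w => a b /=; ring. Qed.

Lemma sqrt_up (v : R) : 0 < v ->
  sqrtC z @[z --> within [set z : R[i] | 0 < Im z] (nbhs ((v ^+ 2)%:C))] --> v%:C.
Proof.
move=> v0.
have FFp : ProperFilter (nbhs ((v ^+ 2)%:C : R[i])) by exact: nbhs_pfilter.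
have FF : Filter (within [set z : R[i] | 0 < Im z] (nbhs ((v ^+ 2)%:C))) by exact: within_filter.
have FF' : Filter (nbhs (within [set z : R[i] | 0 < Im z] (nbhs ((v ^+ 2)%:C)))) by exact: FF.
apply: (@cvgC_nc R _ _ FF) => e e0.
have hn := nc_cvgC (FF := FFp) (@cvg_id _ (nbhs ((v ^+ 2)%:C))) (mulr_gt0 e0 v0).
suff : \forall z \near nbhs ((v ^+ 2)%:C : R[i]), 0 < Im z -> nc (v%:C - sqrtC z) < e by [].
move: hn; apply: (filterS (Filter := FFp)) => z hz hA.
set w := sqrtC z.
have hw : w ^+ 2 = z by rewrite sqrtCK.
have hIw := Im_sqrt_ge0 z; rewrite -/w in hIw.
have hRw : 0 < Re w.
  move: hA; rewrite -hw Im_sq => h; nra.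
have hf : (v ^+ 2)%:C - z = (v%:C - w) * (v%:C + w) by rewrite -hw rmorphXn /=; ring.
move: hz; rewrite hf ncM => hz.
have hge : v <= nc (v%:C + w).
  apply: le_trans (nc_Re _); have -> : Re (v%:C + w) = v + Re w by case: (w).
  rewrite ger0_norm; lra.
have := nc_ge0 (v%:C - w); nra.
Qed.

Lemma sqrt_down (v : R) : 0 < v ->
  sqrtC z @[z --> within [set z : R[i] | Im z < 0] (nbhs ((v ^+ 2)%:C))] --> - v%:C.
Proof.
move=> v0.
have FFp : ProperFilter (nbhs ((v ^+ 2)%:C : R[i])) by exact: nbhs_pfilter.
have FF : Filter (within [set z : R[i] | Im z < 0] (nbhs ((v ^+ 2)%:C))) by exact: within_filter.
have FF' : Filter (nbhs (within [set z : R[i] | Im z < 0] (nbhs ((v ^+ 2)%:C)))) by exact: FF.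
apply: (@cvgC_nc R _ _ FF) => e e0.
have hn := nc_cvgC (FF := FFp) (@cvg_id _ (nbhs ((v ^+ 2)%:C))) (mulr_gt0 e0 v0).
suff : \forall z \near nbhs ((v ^+ 2)%:C : R[i]), Im z < 0 -> nc (- v%:C - sqrtC z) < e by [].
move: hn; apply: (filterS (Filter := FFp)) => z hz hA.
set w := sqrtC z.
have hw : w ^+ 2 = z by rewrite sqrtCK.
have hIw := Im_sqrt_ge0 z; rewrite -/w in hIw.
have hRw : Re w < 0.
  move: hA; rewrite -hw Im_sq => h; nra.
have hf : (v ^+ 2)%:C - z = (- v%:C - w) * (- v%:C + w) by rewrite -hw rmorphXn /=; ring.
move: hz; rewrite hf ncM => hz.
have hge : v <= nc (- v%:C + w).
  apply: le_trans (nc_Re _); have -> : Re (- v%:C + w) = - v + Re w by case: (w).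
  rewrite ler0_norm; lra.
have := nc_ge0 (- v%:C - w); nra.
Qed.
End Sqrt.

Section Neu.
Variable R : realType.
Local Notation nc := (@Normc.normc R).
Local Notation Re := (@complex.Re R).
Local Notation Im := (@complex.Im R).
Variables (N : nat) (x : 'I_N -> 'rV[R]_3) (alpha : 'I_N -> R).
Hypothesis A1 : forall n, 0 < alpha n.
Variable k : R[i].
Hypothesis Hk : 0 <= Im k.

Definition cc n := (alpha n)%:C - 'i * k / (4 * pi : R)%:C.

Lemma Re_cc n : Re (cc n) = alpha n + Im k / (4 * pi).
Proof.
rewrite /cc -fmorphV; case: k => a b /=; ring.
Qed.

Lemma nc_cc n : alpha n <= nc (cc n).
Proof.
apply: le_trans (nc_Re _); rewrite Re_cc.
have hp : 0 <= Im k / (4 * pi) by rewrite divr_ge0 // mulr_ge0 // ltW // pi_gt0.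
rewrite ger0_norm; [lra | have := A1 n; lra].
Qed.

Lemma cc_neq0 n : cc n != 0.
Proof.
apply/negP => /eqP h; have := nc_cc n; rewrite h Normc.normc0; have := A1 n; lra.
Qed.

Lemma VK_diag : VK alpha k = diag_mx (\row_n cc n).
Proof. by apply/matrixP => i j; rewrite !mxE; case: eqP => [->|_]; rewrite ?mulr1 ?mulr0 ?mulr1n ?mulr0n. Qed.

Definition Dinv : 'M[R[i]]_N := diag_mx (\row_n (cc n)^-1).

Lemma Dinv_V : Dinv *m VK alpha k = 1%:M.
Proof.
apply/matrixP => i j; rewrite mul_diag_mx !mxE.
case: eqP => [->|_]; last by rewrite !mulr0.
by rewrite mulr1 mulVf // cc_neq0.
Qed.

Lemma V_unit : VK alpha k \in unitmx.
Proof. by case: (mulmx1_unit Dinv_V). Qed.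

Lemma invV : invmx (VK alpha k) = Dinv.
Proof.
by rewrite -[RHS](mulmxK V_unit) Dinv_V mul1mx.
Qed.

Definition AA := invmx (VK alpha k) *m PK x k.

Lemma AA_entry i j : AA i j = (cc i)^-1 * PK x k i j.
Proof. by rewrite /AA invV mul_diag_mx !mxE. Qed.

Lemma nc_expi (w : R[i]) : nc (expi w) = expR (- Im w).
Proof.
rewrite /expi /= !exprMn -mulrDr cos2Dsin2 mulr1 sqrtr_sqr ger0_norm // expR_ge0.
Qed.

Lemma dist3_ge0 (a b : 'rV[R]_3) : 0 <= dist3 a b.
Proof. exact: sqrtr_ge0. Qed.

Lemma nc_AA2 i j : nc (AA i j) ^+ 2 <=
  (if j != i then 1 / ((4 * pi * alpha i) ^+ 2 * dist3 (x i) (x j) ^+ 2) else 0).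
Proof.
rewrite AA_entry mxE.
case: eqP => [->|/eqP hij]; first by rewrite eqxx subrr !mulr0 Normc.normc0 expr0n.
rewrite eq_sym (negbTE hij) /= subr0 mulr1.
set d := dist3 (x i) (x j).
have hd : 0 <= d by exact: dist3_ge0.
have hp : 0 < pi := pi_gt0 R.
have h1 : nc (expi (k * d%:C)) <= 1.
  rewrite nc_expi expR_le1 oppr_le0.
  by case: (k) Hk => a b /= hb; rewrite mulr0 add0r mulr_ge0.
have h2 : nc (cc i)^-1 <= (alpha i)^-1.
  rewrite ncV lef_pV2 ?nc_cc //; rewrite posrE ?A1 //.
  by apply: lt_le_trans (nc_cc i); apply: A1.
have h3 : nc (((4 * pi : R)%:C * d%:C)^-1) = (4 * pi * d)^-1.
  rewrite ncV -rmorphM ncR ger0_norm //; apply: mulr_ge0 => //; lra.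
rewrite ncM ncM h3.
have e1 : 0 <= nc (cc i)^-1 := nc_ge0 _.
have e2 : 0 <= nc (expi (k * d%:C)) := nc_ge0 _.
have e3 : 0 <= (4 * pi * d)^-1 by rewrite invr_ge0 mulr_ge0 //; lra.
have e4 : 0 <= (alpha i)^-1 by rewrite invr_ge0 ltW.
have -> : 1 / ((4 * pi * alpha i) ^+ 2 * d ^+ 2) = ((alpha i)^-1 * (4 * pi * d)^-1) ^+ 2.
  by rewrite mul1r !expr2 !invfM; ring.
apply: lerXn2r; rewrite ?nnegrE ?mulr_ge0 //.
rewrite mulrA; apply: ler_wpM2r => //.
by rewrite -[X in _ <= X]mulr1; apply: ler_pM.
Qed.

Definition Ssum := \sum_(m < N) \sum_(n < N | n != m)
          1 / ((4 * pi * alpha m) ^+ 2 * dist3 (x m) (x n) ^+ 2).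

Lemma FA_le : Fn AA <= Ssum.
Proof.
rewrite /Fn /Ssum; apply: (@ler_sum R) => i _; rewrite [X in _ <= X]big_mkcond /=.
by apply: (@ler_sum R) => j _; exact: nc_AA2.
Qed.

Hypothesis A2 : Ssum < 1.

Lemma Ssum_ge0 : 0 <= Ssum.
Proof. exact: le_trans (Fn_ge0 AA) FA_le. Qed.

Lemma B_unit : (1%:M - AA) \in unitmx.
Proof.
rewrite unitmxE unitfE; apply/negP => /det0P [v vn0 vB].
have hv : v = v *m AA by move: vB; rewrite mulmxBr mulmx1 => /eqP; rewrite subr_eq0 => /eqP.
have h := Fn_mul v AA; rewrite -hv in h.
have h0 := Fn_ge0 v; have h1 := FA_le; have h2 := Fn_ge0 AA; have h3 := A2.
have : Fn v <= 0 by nra.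
by move/Fn_eq0 => v0; rewrite v0 eqxx in vn0.
Qed.

Lemma Gamma_dec : VK alpha k *m (1%:M - AA) = GammaK x alpha k.
Proof.
rewrite mulmxBr mulmx1 /AA mulmxA mulmxV ?V_unit // mul1mx.
by apply/matrixP => i j; rewrite !mxE.
Qed.

Lemma Gamma_unit : GammaK x alpha k \in unitmx.
Proof. by rewrite -Gamma_dec unitmx_mul V_unit B_unit. Qed.

Local Notation T := (neumann_term x alpha k).

Lemma T_S j : T j.+1 = AA *m T j.
Proof. by rewrite /neumann_term /= mulmxA. Qed.

Lemma T_0 : T 0 = invmx (VK alpha k).
Proof. by rewrite /neumann_term /= mul1mx. Qed.

Lemma F_T j : Fn (T j) <= Ssum ^+ j * Fn (T 0).
Proof.
elim: j => [|j IH]; first by rewrite expr0 mul1r.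
rewrite T_S exprS -mulrA; apply: le_trans (Fn_mul _ _) _.
apply: ler_pM => //; [exact: Fn_ge0 | exact: Fn_ge0 | exact: FA_le].
Qed.

Definition qq := (1 + Ssum) / 2.
Definition CC := 1 + Fn (T 0).

Lemma qq_ge0 : 0 <= qq.
Proof. rewrite /qq; have := Ssum_ge0; lra. Qed.
Lemma qq_lt1 : qq < 1.
Proof. rewrite /qq; have := A2; lra. Qed.

Lemma T_bound j m n : nc (T j m n) <= CC * qq ^+ j.
Proof.
have h1 := Fn_entry (T j) m n.
have h2 := F_T j.
have hS : Ssum ^+ j <= (qq ^+ 2) ^+ j.
  apply: lerXn2r; rewrite ?nnegrE ?Ssum_ge0 ?sqr_ge0 //.
  rewrite /qq -subr_ge0.
  have -> : ((1 + Ssum) / 2) ^+ 2 - Ssum = ((1 - Ssum) / 2) ^+ 2 by field.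
  exact: sqr_ge0.
have hF0 := Fn_ge0 (T 0).
have hSj : 0 <= Ssum ^+ j by rewrite exprn_ge0 ?Ssum_ge0.
have hq : 0 <= qq ^+ j by rewrite exprn_ge0 ?qq_ge0.
have hqq : (qq ^+ 2) ^+ j = qq ^+ j * qq ^+ j by rewrite -exprM mulnC exprM expr2.
rewrite hqq in hS.
have hn := nc_ge0 (T j m n).
have hC : Fn (T 0) <= CC ^+ 2 by rewrite /CC; nra.
have h3 : nc (T j m n) ^+ 2 <= (CC * qq ^+ j) ^+ 2.
  apply: le_trans h1 (le_trans h2 _).
  apply: le_trans (ler_wpM2r hF0 hS) _.
  have -> : (CC * qq ^+ j) ^+ 2 = qq ^+ j * qq ^+ j * CC ^+ 2 by ring.
  by apply: ler_wpM2l => //; rewrite mulr_ge0.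
have hCq : 0 <= CC * qq ^+ j by rewrite mulr_ge0 // /CC; lra.
nra.
Qed.

Lemma neumann_ok : neumann_rep x alpha k.
Proof.
move=> m n; split.
  apply: (@series_le_cvg R _ (geometric CC qq)).
  - by move=> j; exact: nc_ge0.
  - by move=> j /=; rewrite mulr_ge0 ?exprn_ge0 ?qq_ge0 // /CC; have := Fn_ge0 (T 0); lra.
  - by move=> j /=; exact: T_bound.
  apply: is_cvg_geometric_series; rewrite ger0_norm ?qq_ge0 //; exact: qq_lt1.
set W := invmx (1%:M - AA).
have hinv : invmx (GammaK x alpha k) = W *m T 0.
  have hX : GammaK x alpha k *m (W *m T 0) = 1%:M.
    rewrite -Gamma_dec -mulmxA (mulmxA (1%:M - AA)) mulmxV ?B_unit // mul1mx.
    by rewrite T_0 mulmxV ?V_unit.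
  by rewrite -[LHS]mulmx1 -hX mulKmx ?Gamma_unit.
have hS J : \sum_(0 <= j < J) T j = W *m (T 0 - T J).
  have hB : (1%:M - AA) *m (\sum_(0 <= j < J) T j) = T 0 - T J.
    rewrite mulmxBl mul1mx mulmx_sumr.
    rewrite [X in _ - X](eq_bigr (fun i => T i.+1)); last by move=> i _; rewrite T_S.
    rewrite -sumrB -[RHS]opprB -(telescope_sumr _ (leq0n J)) -sumrN.
    by apply: eq_bigr => j _; rewrite opprB.
  by rewrite -hB mulKmx ?B_unit.
have hdiff J : invmx (GammaK x alpha k) - \sum_(0 <= j < J) T j = W *m T J.
  by rewrite hinv hS mulmxBr opprB addrC subrK.
set K := \sum_l nc (W m l) * CC.
have hK : 0 <= K.
  by apply: sumr_ge0 => l _; rewrite mulr_ge0 ?nc_ge0 // /CC; have := Fn_ge0 (T 0); lra.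
have hbound J : nc ((W *m T J) m n) <= K * qq ^+ J.
  rewrite mxE /K mulr_suml; apply: le_trans (nc_sum _) _.
  apply: (@ler_sum R) => l _; rewrite ncM -mulrA.
  by apply: ler_wpM2l; [exact: nc_ge0 | exact: T_bound].
apply: cvgC_nc => e e0.
have hq : (GRing.exp qq : R ^nat) @ \oo --> 0.
  by apply: cvg_expr; rewrite ger0_norm ?qq_ge0 //; exact: qq_lt1.
have eK : 0 < e / (K + 1) by rewrite divr_gt0 //; lra.
move/cvgrPdist_lt : hq => /(_ _ eK).
apply: filterS => J hJ.
rewrite sub0r normrN ger0_norm ?exprn_ge0 ?qq_ge0 // in hJ.
have -> : invmx (GammaK x alpha k) m n - series (fun j => T j m n) J = (W *m T J) m n.
  by rewrite /series /= -summxE -hdiff !mxE.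
have hqJ : 0 <= qq ^+ J by rewrite exprn_ge0 ?qq_ge0.
have hK1 : 0 < K + 1 by lra.
have ht : e / (K + 1) * (K + 1) = e by rewrite divfK // gt_eqF.
have := hbound J; nra.
Qed.
End Neu.

Unset Implicit Arguments.
Set Strict Implicit.

Theorem lemma3p1 (R : realType) (N : nat) (x : 'I_N -> 'rV[R]_3)
  (alpha : 'I_N -> R)
  (Hdistinct : injective x)
  (A1 : forall n, 0 < alpha n)
  (A2 : \sum_(m < N) \sum_(n < N | n != m)
          1 / ((4 * pi * alpha m) ^+ 2 * dist3 (x m) (x n) ^+ 2) < 1) :
  (forall z : R[i], ~ on_cut z ->
     Gamma x alpha z \in unitmx /\ neumann_rep x alpha (sqrt_branch z)) /\
  (forall v : R, 0 < v ->
     (forall m n : 'I_N,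
        (fun z => Gamma x alpha z m n)
          @ within [set z : R[i] | 0 < complex.Im z] (nbhs ((v ^+ 2)%:C))
          --> GammaK x alpha (v%:C) m n) /\
     (forall m n : 'I_N,
        (fun z => Gamma x alpha z m n)
          @ within [set z : R[i] | complex.Im z < 0] (nbhs ((v ^+ 2)%:C))
          --> GammaK x alpha (- v%:C) m n) /\
     GammaK x alpha (v%:C) \in unitmx /\
     GammaK x alpha (- v%:C) \in unitmx /\
     ((0 < N)%N -> GammaK x alpha (v%:C) != GammaK x alpha (- v%:C)) /\
     neumann_rep x alpha (v%:C) /\
     neumann_rep x alpha (- v%:C)).
Proof.
have A2' : Ssum x alpha < 1 by exact: A2.
split.
  move=> z _; have Hk := Im_sqrt_ge0 z.
  by split; [exact: (Gamma_unit A1 Hk A2') | exact: (neumann_ok A1 Hk A2')].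
move=> v v0.
have Hp : 0 <= complex.Im (v%:C : R[i]) by [].
have Hm : 0 <= complex.Im (- v%:C : R[i]) by rewrite /= oppr0.
have FFp : ProperFilter (nbhs ((v ^+ 2)%:C : R[i])) by exact: nbhs_pfilter.
have FFu : Filter (within [set z : R[i] | 0 < complex.Im z] (nbhs ((v ^+ 2)%:C))) by exact: within_filter.
have FFd : Filter (within [set z : R[i] | complex.Im z < 0] (nbhs ((v ^+ 2)%:C))) by exact: within_filter.
split.
  move=> m n.
  exact: (@continuous_cvg _ _ _ _ FFu _ (fun k => GammaK x alpha k m n) _ (@cont_GK R N x alpha m n (v%:C)) (sqrt_up v0)).
split.
  move=> m n.
  exact: (@continuous_cvg _ _ _ _ FFd _ (fun k => GammaK x alpha k m n) _ (@cont_GK R N x alpha m n (- v%:C)) (sqrt_down v0)).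
split; first exact: (Gamma_unit A1 Hp A2').
split; first exact: (Gamma_unit A1 Hm A2').
split.
  move=> N0; pose i := Ordinal N0.
  apply/negP => /eqP h.
  have := congr1 (fun M : 'M[R[i]]_N => complex.Im (M i i)) h.
  rewrite /= !mxE eqxx subrr !mulr0 !subr0 !mulr1 -!fmorphV /=.
  have hp := pi_gt0 R.
  have hv : 0 < v / (4 * pi) by rewrite divr_gt0 //; lra.
  rewrite !(mul0r, mulr0, mul1r, subr0, add0r, sub0r, oppr0) mulNr; lra.
by split; [exact: (neumann_ok A1 Hp A2') | exact: (neumann_ok A1 Hm A2')].
Qed.
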